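(* Both $S_A$ and $S_B$ are nonempty.
   Context: All graphs are finite and simple. A graph $G$ is a minimal prime graph complement if $G$ has at least $2$ vertices and: (1) the complement $\overline{G}$ is connected; (2) $G$ is triangle-free; (3) $G$ is $3$-colorable; (4) for any two distinct nonadjacent vertices $u,v$ of $G$, adding the edge $uv$ to $G$ yields a graph that either contains a triangle or is not $3$-colorable. Standing setup: $\Gamma$ is a minimal prime graph complement with a vertex $X$ of degree $2$, whose two neighbors are $A$ and $B$. Among the vertices of $\Gamma$ other than $X,A,B$: $S_A$ is the set of those adjacent to $A$ but not $B$; $S_B$ the set of those adjacent to $B$ but not $A$; $S_Y$ the set of those adjacent to both $A$ and $B$; $S_Z$ the set of those adjacent to neither $A$ nor $B$. *)

(* Defs.v *)
From mathcomp Require Import all_boot.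
Set Implicit Arguments. Unset Strict Implicit. Unset Printing Implicit Defensive.

Definition simple_graph (T : finType) (e : rel T) : Prop :=
  symmetric e /\ irreflexive e.

Definition compl_rel (T : finType) (e : rel T) : rel T :=
  fun x y => (x != y) && ~~ e x y.

Definition graph_connected (T : finType) (e : rel T) : Prop :=
  forall x y : T, connect e x y.

Definition triangle_free (T : finType) (e : rel T) : Prop :=
  forall x y z : T, ~ [&& e x y, e y z & e z x].

Definition colorable (k : nat) (T : finType) (e : rel T) : Prop :=
  exists c : T -> 'I_k, forall x y : T, e x y -> c x != c y.

Definition add_edge (T : finType) (e : rel T) (u v : T) : rel T :=
  fun x y => [|| e x y, (x == u) && (y == v) | (x == v) && (y == u)].

Definition minimal_prime_graph_complement (T : finType) (e : rel T) : Prop :=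
  [/\ 1 < #|T|,
      graph_connected (compl_rel e),
      triangle_free e,
      colorable 3 e &
      forall u v : T, u != v -> ~~ e u v ->
        ~ triangle_free (add_edge e u v) \/ ~ colorable 3 (add_edge e u v)].

(* S_A : vertices other than X, A, B adjacent to A but not B. *)
Definition S_only (T : finType) (e : rel T) (X A B : T) : {set T} :=
  [set v | [&& v != X, v != A, v != B, e A v & ~~ e B v]].

(* Main.v *)
Require Import Defs.
From mathcomp Require Import all_boot.

Lemma third (a b : 'I_3) : exists k : 'I_3, (k != a) && (k != b).
Proof.
case: a => [[|[|[|a]]] ha] //; case: b => [[|[|[|b]]] hb] //;
  first [ by exists (@Ordinal 3 2 isT) | by exists (@Ordinal 3 1 isT) | by exists (@Ordinal 3 0 isT)].
Qed.

Lemma add_tf (T : finType) (e : rel T) u v :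
  simple_graph e -> u != v -> triangle_free e ->
  (forall w, e u w -> e v w -> False) -> triangle_free (add_edge e u v).
Proof.
move=> [sy irr] nuv tf cn x y z /and3P [].
rewrite /add_edge.
have E : forall a b, e a b -> e b a by move=> a b; rewrite sy.
case/or3P=> [h1|/andP[/eqP ? /eqP ?]|/andP[/eqP ? /eqP ?]];
case/or3P=> [h2|/andP[/eqP ? /eqP ?]|/andP[/eqP ? /eqP ?]];
case/or3P=> [h3|/andP[/eqP ? /eqP ?]|/andP[/eqP ? /eqP ?]]; subst;
  rewrite ?eqxx in nuv; try done;
  try (by apply: (tf x y z); rewrite h1 h2 h3);
  try (by rewrite irr in h1); try (by rewrite irr in h2); try (by rewrite irr in h3);
  eauto.
Qed.

Lemma add_col (T : finType) (e : rel T) u v (d : T -> 'I_3) :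
  (forall x y, e x y -> d x != d y) -> d u != d v ->
  colorable 3 (add_edge e u v).
Proof.
move=> hd nuv; exists d => x y; rewrite /add_edge.
case/or3P=> [/hd //|/andP[/eqP -> /eqP ->]//|/andP[/eqP -> /eqP ->]].
by rewrite eq_sym.
Qed.

Lemma key (T : finType) (e : rel T) (X A B : T) :
  simple_graph e ->
  minimal_prime_graph_complement e ->
  A != B ->
  (forall y : T, e X y = (y == A) || (y == B)) ->
  S_only e X A B != set0.
Proof.
move=> [sy irr] [_ conn tf [c hc] mx] nAB hX.
apply/negP => /eqP S0.
have H : forall v, v != X -> v != A -> v != B -> e A v -> e B v.
  move=> v h1 h2 h3 h4; case h5: (e B v) => //.
  have : v \in S_only e X A B by rewrite inE h1 h2 h3 h4 h5.
  by rewrite S0 inE.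
have eXA : e X A by rewrite hX eqxx.
have eXB : e X B by rewrite hX eqxx orbT.
have eAB : ~~ e A B.
  apply/negP => h; apply: (tf X A B); by rewrite eXA h sy eXB.
have NAB : forall w, e A w -> e B w.
  move=> w hw.
  have [->|wX] := eqVneq w X; first by rewrite sy.
  have [wA|wA] := eqVneq w A; first by rewrite wA irr in hw.
  have [wB|wB] := eqVneq w B; first by rewrite -wB hw in eAB.
  exact: H.
pose c' x := if x == A then c B else c x.
have hc' : forall x y, e x y -> c' x != c' y.
  move=> x y; rewrite /c'.
  have [->|xA] := eqVneq x A; have [->|yA] := eqVneq y A.
  - by rewrite irr.
  - by move/NAB/hc.
  - by rewrite sy => /NAB/hc; rewrite eq_sym.
  - exact: hc.
have C1 : forall v, v != A -> v != B -> ~~ e A v -> ~~ e B v.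
  move=> v vA vB nAv; apply/negP => eBv.
  have : A != v by rewrite eq_sym.
  move/(mx A v)/(_ nAv); case.
  - apply; apply: add_tf => //; first by rewrite eq_sym.
    move=> w hAw hvw; apply: (tf B v w); by rewrite eBv hvw sy NAB.
  - apply; apply: (@add_col _ _ _ _ c') => //.
    by rewrite /c' eqxx (negbTE vA); apply: hc.
have C2 : forall v, v != A -> v != B -> e A v.
  move=> v vA vB; apply/negPn/negP => nAv.
  have nBv := C1 v vA vB nAv.
  have vX : X != v by apply/negP => /eqP hv; rewrite -hv sy eXA in nAv.
  have nXv : ~~ e X v by rewrite hX (negbTE vA) (negbTE vB).
  have [k /andP [k1 k2]] := third (c B) (c' v).
  pose d x := if x == X then k else c' x.
  case: (mx X v vX nXv).
  - apply; apply: add_tf => //.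
    move=> w; rewrite hX => /orP [/eqP ->|/eqP ->].
      by rewrite sy (negbTE nAv).
    by rewrite sy (negbTE nBv).
  - apply; apply: (@add_col _ _ _ _ d).
      move=> x y; rewrite /d.
      have [->|xX] := eqVneq x X; have [->|yX] := eqVneq y X.
      + by rewrite irr.
      + rewrite hX => /orP [/eqP ->|/eqP ->]; rewrite /c' ?eqxx //;
        by case: ifP.
      + rewrite sy hX => /orP [/eqP ->|/eqP ->]; rewrite /c' ?eqxx eq_sym //;
        by case: ifP.
      + exact: hc'.
    rewrite eq_sym in vX; by rewrite /d eqxx (negbTE vX).
have XA : X != A by apply/negP => /eqP h; rewrite h irr in eXA.
have XB : X != B by apply/negP => /eqP h; rewrite h irr in eXB.
have cl : forall x y, x \in [:: A; B] -> compl_rel e x y -> y \in [:: A; B].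
  move=> x y; rewrite !inE /compl_rel => hx /andP [_ nxy].
  apply/negPn/negP; rewrite negb_or => /andP [yA yB].
  have eAy := C2 y yA yB.
  by case/orP: hx nxy => /eqP ->; rewrite ?eAy ?NAB.
have Hp : forall p x, x \in [:: A; B] -> path (compl_rel e) x p -> last x p \in [:: A; B].
  elim=> [|y p IH] x hx //= /andP [hxy hp]; exact: IH (cl _ _ hx hxy) hp.
case/connectP: (conn A X) => p hp hl.
have := Hp p A (mem_head _ _) hp.
by rewrite -hl !inE (negbTE XA) (negbTE XB).
Qed.

Theorem lemma12 (T : finType) (e : rel T) (X A B : T) :
  simple_graph e ->
  minimal_prime_graph_complement e ->
  A != B ->
  (forall y : T, e X y = (y == A) || (y == B)) ->
  S_only e X A B != set0 /\ S_only e X B A != set0.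
Proof.
move=> sg m nAB hX; split; first exact: key.
apply: key => //; first by rewrite eq_sym.
by move=> y; rewrite orbC.
Qed.
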